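(* Let $p$ be a prime and $\mathbf{d}=(d_1,\dots,d_l)$ integers with $0\le d_\lambda\le p-1$, and assume $\gamma:=\mathbb{D}_\mathbf{d}-p\ge 0$. Then there is an equality of multisets $$\{\{\,j-\operatorname{sht}(j)\mid 1\le j\le p-1\,\}\}\ \uplus\ \{\{0,-1,\dots,-\gamma\}\}=\Big\{\Big\{\theta\big(\tfrac{s}{r}\big)+i\ \Big|\ \tfrac{s}{r}\in F,\ \gcd(s,r)=1,\ 0\le i\le N_r-1\Big\}\Big\}.$$
   Context: $\mathbb{D}_\mathbf{d}=\sum_\lambda d_\lambda(d_\lambda+1)/2$. $\mathbf{I}^*=\{(\lambda,i)\mid 1\le\lambda\le l,\ 1\le i\le d_\lambda\}$. $\operatorname{sht}(j)=\sum_{(\lambda,i)\in\mathbf{I}^*}\lfloor ij/p\rfloor$ for positive integers $j$. $\theta(y)=1-\lfloor y\rfloor+\lfloor py\rfloor-\sum_{(\lambda,i)\in\mathbf{I}^*}\lfloor iy\rfloor$ for $y\in(0,1]$. $F=\big(\bigcup_{j=1}^{M}\frac1j\mathbb{Z}\big)\cap(0,1]$ with $M=\max_\lambda d_\lambda$, each element written in lowest terms $s/r$. $N_r=\#\{(\lambda,i)\in\mathbf{I}^*\mid r\mid i\}$. $\uplus$ denotes union of multisets (multiplicities add). *)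

(* Defs.v *)
From HB Require Import structures.
From mathcomp Require Import all_boot all_order all_algebra.
Set Implicit Arguments. Unset Strict Implicit. Unset Printing Implicit Defensive.
Import Order.TTheory GRing.Theory Num.Theory.

(* d : seq nat is the tuple (d_1,...,d_l); l = size d.
   I* = {(lambda,i) | 1 <= lambda <= l, 1 <= i <= d_lambda}. *)

Definition DD (d : seq nat) : nat := \sum_(dl <- d) (dl * dl.+1) %/ 2.

Definition sht (p : nat) (d : seq nat) (j : nat) : nat :=
  \sum_(dl <- d) \sum_(1 <= i < dl.+1) (i * j) %/ p.

Local Open Scope ring_scope.

Definition theta (p : nat) (d : seq nat) (y : rat) : int :=
  1 - Num.floor y + Num.floor (p%:R * y)
    - \sum_(dl <- d) \sum_(1 <= i < dl.+1) Num.floor (i%:R * y).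

Definition maxd (d : seq nat) : nat := \max_(dl <- d) dl.

(* F = (U_{j=1}^M (1/j) Z) ∩ (0,1], as a duplicate-free list of rationals;
   (1/j)Z ∩ (0,1] = { k/j | 1 <= k <= j }. *)
Definition Fset (d : seq nat) : seq rat :=
  undup (flatten [seq [seq (k%:R / j%:R : rat) | k <- iota 1 j]
                   | j <- iota 1 (maxd d)]).

Definition Nr (d : seq nat) (r : nat) : nat :=
  \sum_(dl <- d) count (fun i => (r %| i)%N) (iota 1 dl).

Definition lhs_ms (p : nat) (d : seq nat) : seq int :=
  [seq (j%:Z - (sht p d j)%:Z) | j <- iota 1 (p.-1)]
  ++ [seq - (k%:Z) | k <- iota 0 ((DD d - p).+1)].

(* right-hand multiset; an element x = s/r of F in lowest terms has
   r = denq x (and s = numq x). *)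
Definition rhs_ms (p : nat) (d : seq nat) : seq int :=
  flatten [seq [seq theta p d x + i%:Z
               | i <- iota 0 (Nr d `|denq x|%N)] | x <- Fset d].

(* Main.v *)
Require Import Defs.
From mathcomp Require Import all_boot all_order all_algebra.
From mathcomp Require Import zify ring lra.
Set Implicit Arguments. Unset Strict Implicit. Unset Printing Implicit Defensive.
Import Order.TTheory GRing.Theory Num.Theory.
Local Open Scope ring_scope.

Lemma intchar (m : nat) (y : rat) :
  (m%:R * y \is a Num.int) = (`|denq y| %| m)%N.
Proof.
have hq : (denq y)%:~R != 0 :> rat by rewrite intr_eq0 denq_neq0.
apply/idP/idP.
- move/ratArchimedean.intrP => [z hz].
  have e : (m%:Z * numq y) = z * denq y.
    apply: (@intr_inj rat). rewrite !rmorphM /= numqE mulrA -hz.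
    by rewrite -[(m%:Z)%:~R]/(m%:R : rat) .
  have : (denq y %| m%:Z * numq y)%Z by rewrite e dvdz_mull.
  rewrite Gauss_dvdzl //.
  by rewrite coprimezE coprime_sym coprime_num_den.
- move=> /dvdnP [c hc].
  have -> : m%:R * y = (c%:Z * numq y)%:~R.
    rewrite rmorphM /= numqE.
    rewrite hc natrM -[c%:Z%:~R]/(c%:R : rat) -mulrA. congr (_ * _).
    rewrite mulrC. congr (_ * _). 
    have := absz_denq y. move=> <-. by [].
  exact: intr_int.
Qed.
Definition ind (b : bool) : int := if b then 1 else 0.

Lemma count_ind (T : eqType) (a : pred T) (s : seq T) :
  (count a s)%:Z = \sum_(x <- s) ind (a x).
Proof.
elim: s => [|x s IH]; first by rewrite big_nil.
by rewrite /= big_cons PoszD IH; case: (a x).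
Qed.

Lemma cnt_rng (a v : int) n :
  (count_mem v [seq a + i%:Z | i <- iota 0 n])%:Z = ind ((a <= v) && (v < a + n%:Z)).
Proof.
elim: n => [|n IH].
  rewrite /= addr0 /ind. case: (lerP a v) => h /=; last by []. case: (ltrP v a) => //; lia.
rewrite -addn1 iotaD map_cat count_cat PoszD IH /= add0n addn0.
rewrite /ind. case: (lerP a v) => h1 /=; case: (ltrP v (a + n%:Z)) => h2; case: (ltrP v (a + (n+1)%N%:Z)) => h3; case: eqP => h4; lia.
Qed.

Lemma floor_step (a b : rat) : a < b ->
  (forall k : int, a < k%:~R -> k%:~R < b -> False) ->
  Num.floor b = Num.floor a + ind (b \is a Num.int).
Proof.
move=> ab hk.
set f := Num.floor a.
have /andP [fa af] := floor_itv a.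
have hb : b <= (f + 1)%:~R.
  rewrite leNgt; apply/negP => h; exact: (hk (f+1)).
case: (ltrP b (f + 1)%:~R) => hb2.
- have fb : Num.floor b = f.
    apply: floor_def; rewrite hb2 andbT; exact: (le_trans fa (ltW ab)).
  rewrite fb /ind; case: ifP => [bi|]; last by rewrite addr0.
  exfalso. move: bi; rewrite intrEfloor fb => /eqP e.
  by move: (le_lt_trans fa ab); rewrite e ltxx.
- have e : b = (f + 1)%:~R by apply/eqP; rewrite eq_le hb hb2.
  rewrite e intr_int /= intrKfloor. by [].
Qed.

Section Main.
Variables (p : nat) (d : seq nat).
Hypothesis pp : prime p.
Hypothesis hd : all (fun dl => dl <= p.-1)%N d.

Definition pts : seq rat := [seq (j%:R / p%:R : rat) | j <- iota 1 p.-1].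

Lemma p_gt1 : (1 < p)%N. Proof. exact: prime_gt1. Qed.
Lemma p_gt0r : 0 < (p%:R : rat). Proof. rewrite ltr0n; exact: prime_gt0. Qed.

Lemma maxd_le : (maxd d <= p.-1)%N.
Proof. by apply/bigmax_leqP_seq => dl hdl _; move/allP: hd => /(_ dl hdl). Qed.

Lemma memF y : reflect (exists2 j, (1 <= j <= maxd d)%N &
   exists2 k, (1 <= k <= j)%N & y = k%:R / j%:R) (y \in Fset d).
Proof.
rewrite /Fset mem_undup; apply: (iffP flatten_mapP).
- move=> [j]; rewrite mem_iota => hj /mapP [k]; rewrite mem_iota => hk ->.
  exists j; first by lia. exists k => //; lia.
- move=> [j hj [k hk ->]]. exists j; first by rewrite mem_iota; lia.
  apply/mapP; exists k => //; rewrite mem_iota; lia.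
Qed.

Lemma memP y : reflect (exists2 j, (1 <= j <= p.-1)%N & y = j%:R / p%:R) (y \in pts).
Proof.
apply: (iffP mapP).
- move=> [j]; rewrite mem_iota => hj ->; exists j => //; lia.
- move=> [j hj ->]; exists j => //; rewrite mem_iota; lia.
Qed.

Lemma divn_int (k j : nat) : (0 < j)%N -> (j%:R * (k%:R / j%:R) : rat) = k%:R.
Proof. move=> hj. rewrite mulrC -mulrA mulVf ?mulr1 // pnatr_eq0; lia. Qed.

Lemma not_int01 (y : rat) : 0 < y -> y < 1 -> y \is a Num.int = false.
Proof.
move=> h0 h1; apply/negP; rewrite intrEfloor => /eqP e.
have : Num.floor y = 0 by apply: floor_def; rewrite ltW //= add0r.
by move=> fy; move: h0; rewrite -e fy.
Qed.

Lemma pts_bounds y : y \in pts -> 0 < y /\ y < 1.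
Proof.
move=> /memP [j hj ->]; split.
  by rewrite divr_gt0 ?p_gt0r // ltr0n; lia.
by rewrite ltr_pdivrMr ?p_gt0r // mul1r ltr_nat; move: p_gt1; lia.
Qed.

Lemma denq_pts y : y \in pts -> `|denq y|%N = p.
Proof.
move=> hy; have /memP [j hj ey] := hy.
have : (`|denq y| %| p)%N.
  by rewrite -intchar ey divn_int ?natr_int // prime_gt0.
case/primeP: pp => _ /[apply] /orP [/eqP e1|/eqP //].
have [h0 h1] := pts_bounds hy.
have := intchar 1 y; rewrite e1 dvdnn mul1r not_int01 //.
Qed.

Lemma F_bounds y : y \in Fset d -> [/\ 0 < y, y <= 1 & (`|denq y| <= maxd d)%N].
Proof.
move=> /memF [j hj [k hk ey]]; split.
- by rewrite ey divr_gt0 // ltr0n; lia.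
- by rewrite ey ler_pdivrMr ?mul1r ?ler_nat ?ltr0n; lia.
- have : (`|denq y| %| j)%N by rewrite -intchar ey divn_int ?natr_int //; lia.
  move/dvdn_leq => h; have := h ltac:(lia); lia.
Qed.

Lemma F_notpts y : y \in Fset d -> y \in pts = false.
Proof.
move=> hy; apply/negP => /denq_pts e; have [_ _] := F_bounds hy.
rewrite e; have := maxd_le; have := p_gt1; lia.
Qed.
Definition P0 := pts ++ Fset d.
Definition delta (y : rat) : int :=
  if y \in pts then 1 else - (Nr d `|denq y|%N)%:Z.

Lemma no_int (y' y : rat) (m : nat) (k : int) : 0 <= y' -> y <= 1 ->
  (forall z, z \in P0 -> y' < z -> z < y -> False) ->
  (0 < m)%N -> [\/ m = p, m = 1%N | (m <= maxd d)%N] ->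
  m%:R * y' < k%:~R -> k%:~R < m%:R * y -> False.
Proof.
move=> h0 h1 hz hm hcase hk1 hk2.
have mpos : 0 < (m%:R : rat) by rewrite ltr0n.
have k0 : 0 < k.
  by rewrite -(ltr0z rat); apply: le_lt_trans hk1; rewrite mulr_ge0 // ler0n.
have km : k < m%:Z.
  rewrite -(ltr_int rat); apply: (lt_le_trans hk2); rewrite [X in _ <= X]/(intmul _ _).
  by rewrite -[X in _ <= X]mulr1 ler_wpM2l // ler0n.
case: k k0 km hk1 hk2 => [kk|kk] //= k0 km hk1 hk2.
have hzy : y' < kk%:R / m%:R /\ kk%:R / m%:R < y.
  split.
  - by rewrite ltr_pdivlMr // mulrC.
  - by rewrite ltr_pdivrMr // mulrC.
have hin : kk%:R / m%:R \in P0.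
  rewrite mem_cat; case: hcase => [e|e|e].
  - apply/orP; left; apply/memP; exists kk; [lia | by rewrite e].
  - lia.
  - apply/orP; right; apply/memF; exists m; first lia.
    exists kk => //; lia.
by case: hzy; apply: hz.
Qed.

Lemma fstep (y' y : rat) (m : nat) : 0 <= y' -> y' < y -> y <= 1 ->
  (forall z, z \in P0 -> y' < z -> z < y -> False) ->
  (0 < m)%N -> [\/ m = p, m = 1%N | (m <= maxd d)%N] ->
  Num.floor (m%:R * y) = Num.floor (m%:R * y') + ind (`|denq y| %| m)%N.
Proof.
move=> h0 hy h1 hz hm hc.
rewrite -intchar; apply: floor_step.
  by rewrite ltr_pM2l // ltr0n.
move=> k; exact: no_int h0 h1 hz hm hc.
Qed.
Lemma le_maxd dl : dl \in d -> (dl <= maxd d)%N.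
Proof. move=> h; exact: (@leq_bigmax_seq _ d xpredT id dl h). Qed.

Lemma iotaE dl : index_iota 1 dl.+1 = iota 1 dl.
Proof. by rewrite /index_iota subSS subn0. Qed.

Lemma theta_split (y' y : rat) : 0 <= y' -> y' < y -> y <= 1 ->
  (forall z, z \in P0 -> y' < z -> z < y -> False) ->
  theta p d y = theta p d y' + (- ind (`|denq y| %| 1)%N + ind (`|denq y| %| p)%N
                                 - (Nr d `|denq y|%N)%:Z).
Proof.
move=> h0 hy h1 hz.
have e1 := fstep h0 hy h1 hz (isT : (0 < 1)%N) (Or32 _ _ (erefl 1%N)).
rewrite !mul1r in e1.
have ep := fstep h0 hy h1 hz (prime_gt0 pp) (Or31 _ _ (erefl p)).
have es : \sum_(dl <- d) \sum_(1 <= i < dl.+1) Num.floor (i%:R * y) =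
   \sum_(dl <- d) \sum_(1 <= i < dl.+1) Num.floor (i%:R * y') + (Nr d `|denq y|%N)%:Z.
  rewrite /Nr (big_morph Posz PoszD (erefl _)) -big_split /=; apply: eq_big_seq => dl hdl.
  rewrite count_ind -iotaE -big_split /=; apply: eq_big_seq => i.
  rewrite mem_index_iota => hi.
  apply: fstep => //; first lia.
  apply: Or33; have := le_maxd hdl; lia.
rewrite /theta e1 ep es. ring.
Qed.

Lemma Nr_p : Nr d p = 0%N.
Proof.
rewrite /Nr big1_seq // => dl /andP [_ hdl].
rewrite (@eq_in_count _ _ pred0) ?count_pred0 // => i.
rewrite mem_iota => hi /=; apply/negP => /dvdn_leq.
move/allP: hd => /(_ dl hdl); lia.
Qed.

Lemma delta_eq y : y \in P0 ->
  - ind (`|denq y| %| 1)%N + ind (`|denq y| %| p)%N - (Nr d `|denq y|%N)%:Z = delta y.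
Proof.
rewrite /delta mem_cat => /orP [hy|hy].
  rewrite hy denq_pts // Nr_p dvdn1 dvdnn; move: p_gt1; case: eqP => [->|] //.
rewrite F_notpts //.
have [_ _ hr] := F_bounds hy.
have : (`|denq y| %| p)%N = (`|denq y| %| 1)%N.
  rewrite dvdn1; apply/idP/idP => [|/eqP ->]; last exact: dvd1n.
  case/primeP: pp => _ /[apply] /orP [//|/eqP e].
  have := maxd_le; have := p_gt1; lia.
move=> ->; ring.
Qed.
Lemma P0_bounds y : y \in P0 -> 0 < y /\ y <= 1.
Proof.
rewrite mem_cat => /orP [/pts_bounds [h0 h1]|/F_bounds [h0 h1 _]] //.
by split => //; rewrite ltW.
Qed.

Lemma tele (v : int) (h1in : 1 \in P0) s (y' : rat) : 0 <= y' -> y' <= 1 ->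
  path <%R y' s -> (forall z, z \in P0 -> y' < z -> z \in s) ->
  (forall z, z \in s -> z \in P0) ->
  \sum_(y <- s) (ind (theta p d y <= v) - ind (theta p d y - delta y <= v)) =
  ind (theta p d 1 <= v) - ind (theta p d y' <= v).
Proof.
elim: s y' => [|y s IH] y' h0 h1 hpath hall hsub.
  rewrite big_nil.
  have e : y' = 1.
    apply/eqP; rewrite eq_le h1 /= leNgt; apply/negP => hlt.
    by have := hall 1 h1in hlt.
  by rewrite e subrr.
move: hpath => /= /andP [hy hpath].
have yP : y \in P0 by apply: hsub; rewrite mem_head.
have [y0 y1] := P0_bounds yP.
have hmin : all (fun z => y < z) s.
  by apply: (order_path_min (@lt_trans _ _)).
have hz : forall z, z \in P0 -> y' < z -> z < y -> False.
  move=> z zP hz1 hz2; move: (hall z zP hz1); rewrite in_cons => /orP [/eqP e|zs].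
    by move: hz2; rewrite e ltxx.
  by move/allP: hmin => /(_ z zs); rewrite ltNge (ltW hz2).
have ht := theta_split h0 hy y1 hz.
rewrite delta_eq // in ht.
rewrite big_cons (IH y) //; first last.
- by move=> z zs; apply: hsub; rewrite in_cons zs orbT.
- move=> z zP hz1; move: (hall z zP (lt_trans hy hz1)).
  by rewrite in_cons => /orP [/eqP e|//]; move: hz1; rewrite e ltxx.
- exact: ltW (le_lt_trans h0 hy).
have -> : theta p d y - delta y = theta p d y' by rewrite ht addrK.
ring.
Qed.
Lemma floor_nat n : Num.floor (n%:R : rat) = n%:Z.
Proof. exact: (intrKfloor (n%:Z)). Qed.

Lemma floor_divn n : Num.floor (n%:R / p%:R : rat) = (n %/ p)%:Z.
Proof.
have hp := p_gt0r.
apply: floor_def; rewrite ler_pdivlMr // ltr_pdivrMr //.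
have -> : ((n %/ p)%:Z + 1) = (n %/ p).+1%:Z by rewrite -addn1 PoszD.
rewrite -!pmulrn -!natrM ler_nat ltr_nat leq_trunc_div /=.
by rewrite ltn_ceil ?prime_gt0.
Qed.

Lemma theta0 : theta p d 0 = 1.
Proof.
rewrite /theta mulr0 floor0 subr0 addr0 big1 ?subr0 // => dl _.
by rewrite big1 // => i _; rewrite mulr0 floor0.
Qed.

Lemma sum_id dl : \sum_(1 <= i < dl.+1) (i%:Z) = ((dl * dl.+1) %/ 2)%N%:Z.
Proof.
rewrite -(big_morph Posz PoszD (erefl _)); congr Posz.
have := bin2_sum dl.+1; rewrite big_ltn // add0n => ->.
by rewrite bin2 divn2 mulnC.
Qed.

Lemma theta1 : theta p d 1 = p%:Z - (DD d)%:Z.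
Proof.
rewrite /theta mulr1 floor1 floor_nat subrr add0r /DD.
rewrite (big_morph Posz PoszD (erefl _)); congr (_ - _).
apply: eq_bigr => dl _; rewrite -sum_id; apply: eq_bigr => i _.
by rewrite mulr1 floor_nat.
Qed.

Lemma theta_pts j : (1 <= j <= p.-1)%N ->
  theta p d (j%:R / p%:R) = 1 + j%:Z - (sht p d j)%:Z.
Proof.
move=> hj.
have [h0 h1] : 0 < (j%:R / p%:R : rat) /\ (j%:R / p%:R : rat) < 1.
  by apply: pts_bounds; apply/memP; exists j.
rewrite /theta divn_int ?prime_gt0 // floor_nat.
have -> : Num.floor (j%:R / p%:R : rat) = 0 by apply: floor_def; rewrite ltW //= add0r.
rewrite subr0 /sht (big_morph Posz PoszD (erefl _)); congr (_ - _).
apply: eq_bigr => dl _; rewrite (big_morph Posz PoszD (erefl _)).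
by apply: eq_bigr => i _; rewrite mulrA -natrM floor_divn.
Qed.

Lemma uniq_P0 : uniq P0.
Proof.
rewrite /P0 cat_uniq undup_uniq andbT; apply/andP; split.
  rewrite map_inj_uniq ?iota_uniq // => a b /= e.
  have : (a%:R : rat) = b%:R.
    by apply: (mulIf _ e); rewrite invr_eq0 pnatr_eq0; have := p_gt1; lia.
  by move/eqP; rewrite eqr_nat => /eqP.
apply/hasPn => y hy /=; by rewrite F_notpts.
Qed.

Lemma one_in (hD : (p <= DD d)%N) : 1 \in P0.
Proof.
rewrite mem_cat; apply/orP; right; apply/memF.
have hm : (0 < maxd d)%N.
  rewrite lt0n; apply/negP => /eqP m0.
  move: hD; rewrite /DD big1_seq; first by have := p_gt1; lia.
  move=> dl /andP [_ hdl]; have := le_maxd hdl; rewrite m0 leqn0 => /eqP ->.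
  by rewrite mul0n div0n.
exists 1%N; first lia. exists 1%N => //.
Qed.
End Main.

Lemma cnt_neg (v : int) n :
  (count_mem v [seq - k%:Z | k <- iota 0 n])%:Z = ind ((- n%:Z < v) && (v <= 0)).
Proof.
elim: n => [|n IH].
  rewrite /= /ind; case: ifP => // /andP [a b]; lia.
rewrite -addn1 iotaD map_cat count_cat PoszD IH /= add0n addn0.
rewrite /ind. case: (lerP v 0) => h1; case: (ltrP (- n%:Z) v) => h2; case: (ltrP (- (n+1)%N%:Z) v) => h3; case: eqP => h4; rewrite /= ?andbT ?andbF; lia.
Qed.

Local Close Scope ring_scope.
Unset Implicit Arguments.

Theorem mainTheorem4 (p : nat) (d : seq nat) :
  prime p ->
  all (fun dl => dl <= p.-1) d ->
  p <= DD d ->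
  perm_eq (lhs_ms p d) (rhs_ms p d).
Proof.
Local Open Scope ring_scope.
move=> pp hd hD.
rewrite /perm_eq; apply/allP => v _ /=; apply/eqP.
apply/eqP; rewrite -eqz_nat; apply/eqP.
have ht := @tele p d pp hd v (one_in pp hd hD) (sort <=%O (P0 p d)) 0%R (lexx _) ler01.
rewrite theta0 theta1 in ht.
have hsub : forall z, z \in sort <=%O (P0 p d) -> z \in P0 p d by move=> z; rewrite mem_sort.
have hall : forall z, z \in P0 p d -> (0 < z)%R -> z \in sort <=%O (P0 p d)
  by move=> z; rewrite mem_sort.
have hpath : path <%O 0%R (sort <=%O (P0 p d)).
  rewrite path_sortedE; last exact: lt_trans.
  rewrite sort_lt_sorted (@uniq_P0 p d pp hd) // andbT; apply/allP => z; rewrite mem_sort.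
  by case/(@P0_bounds p d pp hd).
have {ht} ht := ht hpath hall hsub.
rewrite (perm_big _ (permEl (perm_sort <=%O (P0 p d)))) /P0 big_cat /= big_map in ht.
have e1 : (\sum_(j <- iota 1 p.-1) (ind (theta p d (j%:R / p%:R) <= v) -
     ind (theta p d (j%:R / p%:R) - delta p d (j%:R / p%:R) <= v)) =
     - \sum_(j <- iota 1 p.-1) ind ((j%:Z - (sht p d j)%:Z) == v))%R.
  rewrite -sumrN; apply: eq_big_seq => j; rewrite mem_iota => hj.
  have hin : (j%:R / p%:R : rat) \in pts p.
    apply/(@memP p d pp hd). exists j. lia. by [].

  rewrite /delta hin (@theta_pts p d pp hd); last by lia.
  rewrite /ind; case: (lerP (1 + j%:Z - (sht p d j)%:Z) v) => h1;
    case: (lerP (1 + j%:Z - (sht p d j)%:Z - 1) v) => h2; case: eqP => h3; lia.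
have e2 : (\sum_(x <- Fset d) (ind (theta p d x <= v) - ind (theta p d x - delta p d x <= v)) =
     \sum_(x <- Fset d) ind ((theta p d x <= v) && (v < theta p d x + (Nr d `|denq x|)%:Z)))%R.
  apply: eq_big_seq => x hx; rewrite /delta (@F_notpts p d pp hd) // opprK.
  rewrite /ind; case: (lerP (theta p d x) v) => h1;
    case: (lerP (theta p d x + (Nr d `|denq x|)%:Z) v) => h2 /=; lia.
rewrite e1 e2 in ht.
rewrite /lhs_ms /rhs_ms count_cat PoszD cnt_neg count_ind big_map.
rewrite count_flatten sumnE (big_morph Posz PoszD (erefl _)) big_map.
rewrite [X in _ = X]big_map.
have -> : (\sum_(j <- Fset d) (count_mem v [seq theta p d j + i%:Z | i <- iota 0 (Nr d `|denq j|)])%:Z) =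
   \sum_(x <- Fset d) ind ((theta p d x <= v) && (v < theta p d x + (Nr d `|denq x|)%:Z)).
  apply: eq_bigr => x _; exact: cnt_rng.
have -> : \sum_(j <- iota 1 p.-1) ind (pred1 v (j%:Z - (sht p d j)%:Z)) =
   \sum_(j <- iota 1 p.-1) ind ((j%:Z - (sht p d j)%:Z) == v) by [].
move: ht.
set A := \sum_(j <- iota 1 p.-1) ind ((j%:Z - (sht p d j)%:Z) == v).
set B := \sum_(x <- Fset d) _.
rewrite /ind; case: (lerP (p%:Z - (DD d)%:Z) v) => h1; case: (lerP 1 v) => h2;
  case: (ltrP (- (DD d - p).+1%:Z) v) => h3; case: (lerP v 0) => h4 /=; lia.
Qed.
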